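(* Let $\bm\sigma=\sigma_1\bm e_1+\dots+\sigma_r\bm e_r\in\mathbb{Z}^r$ be a changemaker vector with $\sigma_r>1$, let $L=\langle\bm\sigma\rangle^\perp\subseteq\mathbb{Z}^r$, and let $m>1$ be minimal such that $\sigma_m>1$. If $\bm z=\sum z_i\bm e_i\in L$ is irreducible, then $|z_m|\le\sigma_m$.
   Context: $\mathbb{Z}^r$ has the standard pairing. A changemaker vector is $\bm\sigma=\sum\sigma_i\bm e_i$ with $\sigma_1=1$ and $\sigma_{i-1}\le\sigma_i\le1+\sigma_1+\dots+\sigma_{i-1}$. A non-zero $v\in L$ is irreducible if whenever $v=x+y$ with $x,y\in L$ non-zero, $x\cdot y\le-1$. *)

(* Defs.v *)
From mathcomp Require Import all_boot all_order all_algebra.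
Set Implicit Arguments. Unset Strict Implicit. Unset Printing Implicit Defensive.
Import Order.TTheory GRing.Theory Num.Theory.
Local Open Scope ring_scope.

(* Vectors of Z^r are finite functions 'I_r -> int; indices are 0-based,
   so paper's e_1..e_r correspond to ord 0 .. r-1. *)
Definition zvec (r : nat) := {ffun 'I_r -> int}.

Definition dot (r : nat) (x y : zvec r) : int := \sum_(i < r) x i * y i.

Definition changemaker (r : nat) (s : zvec r) : Prop :=
  (forall i : 'I_r, (i : nat) = 0%N -> s i = 1) /\
  (forall i j : 'I_r, (j : nat) = i.+1 ->
      s i <= s j /\ s j <= 1 + \sum_(k < r | (k < j)%N) s k).

Definition in_orth (r : nat) (s : zvec r) (v : zvec r) : Prop := dot v s = 0.

Definition irreducible_in (r : nat) (L : zvec r -> Prop) (v : zvec r) : Prop :=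
  L v /\ v != 0 /\
  forall x y : zvec r, L x -> L y -> x != 0 -> y != 0 -> v = x + y ->
    dot x y <= -1.

(* Main.v *)
Require Import Defs.
From mathcomp Require Import all_boot all_order all_algebra.
From mathcomp Require Import zify.
Import Order.TTheory GRing.Theory Num.Theory.
Local Open Scope ring_scope.
Set Implicit Arguments. Unset Strict Implicit.

Lemma sum_ind (n : nat) (A : pred 'I_n) :
  \sum_i (((A i) : nat)%:Z) = (#|A|)%:Z.
Proof.
have -> : \sum_i (((A i) : nat)%:Z) = (\sum_i ((A i) : nat))%:Z.
  by rewrite (big_morph Posz PoszD (erefl _)).
congr Posz; rewrite -sum1_card [RHS]big_mkcond /=; apply: eq_bigr => i _.
by rewrite unfold_in; case: (A i).
Qed.

Lemma cm_first r (s : zvec r.+1) : changemaker s -> s ord0 = 1.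
Proof. by case=> H _; apply: H. Qed.

Lemma cm_bound r (s : zvec r.+1) : changemaker s ->
  forall j : 'I_r.+1, s j <= 1 + \sum_(k < r.+1 | (k < j)%N) s k.
Proof.
move=> [H0 H1] j.
case: (posnP j) => [Ej|Hj].
  rewrite H0 // big1 ?addr0 // => k; by rewrite Ej ltn0.
have Hj' : (j.-1 < r.+1)%N by have := ltn_ord j; lia.
have Ej : (j : nat) = (Ordinal Hj').+1 by rewrite /= prednK.
by have [] := H1 (Ordinal Hj') j Ej.
Qed.

Lemma cm_mono r (s : zvec r.+1) : changemaker s ->
  forall i j : 'I_r.+1, (i <= j)%N -> s i <= s j.
Proof.
move=> [H0 H1].
suff: forall d (i j : 'I_r.+1), (j : nat) = (i + d)%N -> s i <= s j.
  move=> H i j Hij; apply: (H (j - i)%N); by rewrite subnKC.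
elim=> [|d IH] i j Hj.
  by have -> : i = j by apply: val_inj; rewrite /= Hj addn0.
have Hd : (i + d < r.+1)%N by have := ltn_ord j; lia.
apply: le_trans (IH i (Ordinal Hd) erefl) _.
by have [] := H1 (Ordinal Hd) j ltac:(by rewrite Hj addnS).
Qed.

Lemma cm_pos r (s : zvec r.+1) : changemaker s -> forall i, 1 <= s i.
Proof.
move=> Hc i; rewrite -(cm_first Hc); apply: cm_mono => //.
Qed.

Lemma count_lt (r m : nat) : (m <= r.+1)%N ->
  \sum_(k < r.+1 | (k < m)%N) (1 : int) = m%:Z.
Proof.
move=> Hm; rewrite (big_ord_narrow Hm) sumr_const card_ord.
by rewrite -natz.
Qed.

Lemma ss r (s : zvec r.+1) : changemaker s -> forall n, (n <= r.+1)%N ->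
  forall N : int, 0 <= N -> N <= \sum_(k < r.+1 | (k < n)%N) s k ->
  exists u : 'I_r.+1 -> bool, (forall i, u i -> (i < n)%N) /\
    \sum_i ((u i : nat)%:Z * s i) = N.
Proof.
move=> Hc; elim=> [|n IH] Hn N HN0 HN.
  exists (fun _ => false); split => //.
  have H0 : \sum_(k < r.+1 | (k < 0)%N) s k = 0 by rewrite big1 // => k; rewrite ltn0.
  rewrite H0 in HN; rewrite big1 => [|i _]; last by rewrite mul0r.
  by apply/eqP; rewrite eq_le HN0 HN.
have Hn' : (n < r.+1)%N by [].
pose i0 := Ordinal Hn'.
have Hsplit : \sum_(k < r.+1 | (k < n.+1)%N) s k =
     s i0 + \sum_(k < r.+1 | (k < n)%N) s k.
  rewrite (bigD1 i0) //=; congr (_ + _); apply: eq_bigl => k.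
  rewrite ltnS leq_eqVlt -val_eqE /=.
  by case: (ltngtP k n).
have Hb := cm_bound Hc i0.
case: (lerP N (\sum_(k < r.+1 | (k < n)%N) s k)) => HNs.
  have [u [Hu1 Hu2]] := IH (ltnW Hn) N HN0 HNs.
  exists u; split => // i /Hu1; apply: ltnW.
have [u [Hu1 Hu2]] : exists u : 'I_r.+1 -> bool, (forall i, u i -> (i < n)%N) /\
    \sum_i ((u i : nat)%:Z * s i) = N - s i0.
  apply: IH; first exact: ltnW.
  - rewrite subr_ge0; apply: le_trans Hb _.
    have E : (\sum_(k < r.+1 | (k < i0)%N) s k) = \sum_(k < r.+1 | (k < n)%N) s k by [].
    rewrite E; lia.
  - by rewrite lerBlDl -Hsplit.
exists (fun i => (i == i0) || u i); split.
  by move=> i /orP [/eqP -> //| /Hu1 /ltnW].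
rewrite (bigD1 i0) //= eqxx /= mul1r.
rewrite (bigD1 i0) //= in Hu2.
have Hu0 : u i0 = false by apply/negP => /Hu1; rewrite ltnn.
rewrite Hu0 mul0r add0r in Hu2.
rewrite (eq_bigr (fun i => (u i : nat)%:Z * s i)) ?Hu2; first by rewrite addrC subrK.
by move=> i /negbTE ->.
Qed.

Lemma dotNl r (x y : zvec r) : dot (- x) y = - dot x y.
Proof.
rewrite /dot -sumrN; apply: eq_bigr => i _; by rewrite ffunE mulNr.
Qed.

Lemma dotNr r (x y : zvec r) : dot x (- y) = - dot x y.
Proof.
rewrite /dot -sumrN; apply: eq_bigr => i _; by rewrite ffunE mulrN.
Qed.

Lemma dotBl r (x y w : zvec r) : dot (x - y) w = dot x w - dot y w.
Proof.
rewrite /dot -sumrB; apply: eq_bigr => i _; by rewrite !ffunE mulrBl.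
Qed.

Lemma red r (s z y : zvec r.+1) (i j : 'I_r.+1) :
  irreducible_in (in_orth s) z -> dot y s = 0 -> y i != 0 -> y j != z j ->
  0 <= \sum_k y k * (z k - y k) -> False.
Proof.
move=> [Lz [nz H]] Hy Hi Hj Hf.
have H1 : dot y (z - y) = \sum_k y k * (z k - y k).
  by rewrite /dot; apply: eq_bigr => k _; rewrite !ffunE.
have L2 : in_orth s (z - y) by rewrite /in_orth dotBl Lz Hy subr0.
have N1 : y != 0 by apply/eqP => E; move: Hi; rewrite E ffunE eqxx.
have N2 : z - y != 0.
  apply/eqP => E; have := congr1 (fun f : zvec r.+1 => f j) E; rewrite !ffunE => /eqP.
  by rewrite subr_eq0 eq_sym (negbTE Hj).
have E : z = y + (z - y) by rewrite addrC subrK.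
have := H y (z - y) Hy L2 N1 N2 E.
rewrite H1 => Habs.
have : 0 <= -1 :> int by apply: le_trans Hf Habs.
by [].
Qed.

Lemma irr_neg r (s z : zvec r) :
  irreducible_in (in_orth s) z -> irreducible_in (in_orth s) (- z).
Proof.
move=> [Lz [nz H]]; split; first by rewrite /in_orth dotNl Lz oppr0.
split; first by rewrite oppr_eq0.
move=> x y Lx Ly nx ny E.
suff: dot (- x) (- y) <= -1 by rewrite dotNl dotNr opprK.
apply: H.
- by rewrite /in_orth dotNl Lx oppr0.
- by rewrite /in_orth dotNl Ly oppr0.
- by rewrite oppr_eq0.
- by rewrite oppr_eq0.
- by rewrite -opprD -E opprK.
Qed.

Lemma sum_delta n (m : 'I_n) (f : 'I_n -> int) :
  \sum_i (((i == m) : nat)%:Z * f i) = f m.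
Proof.
rewrite (bigD1 m) //= eqxx mul1r big1 ?addr0 // => i /negbTE ->.
by rewrite mul0r.
Qed.

Lemma sum_delta1 n (m : 'I_n) : \sum_i (((i == m) : nat)%:Z) = 1.
Proof.
rewrite -(sum_delta m (fun _ => 1)); apply: eq_bigr => i _; by rewrite mulr1.
Qed.

Lemma card_lt r (m : nat) : (m <= r.+1)%N ->
  #|[pred i : 'I_r.+1 | (i < m)%N]| = m.
Proof.
move=> Hm; apply/eqP; rewrite -eqz_nat -sum_ind -(count_lt Hm).
rewrite (big_mkcond (fun k : 'I_r.+1 => (k < m)%N)) /=.
by apply/eqP; apply: eq_bigr => i _; case: (i < m)%N.
Qed.

Lemma keyK r (s : zvec r.+1) (m : 'I_r.+1) (z : zvec r.+1) :
  changemaker s -> 1 < s m -> (forall j : 'I_r.+1, (j < m)%N -> ~ (1 < s j)) ->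
  irreducible_in (in_orth s) z -> s m + 1 <= z m -> False.
Proof.
move=> Hc Hs1 Hlt Hirr Ht.
have Hone : forall j : 'I_r.+1, (j < m)%N -> s j = 1.
  move=> j Hj; apply/eqP; rewrite eq_le cm_pos // andbT leNgt; apply/negP.
  exact: Hlt.
have Hm0 : (0 < m)%N.
  rewrite lt0n; apply/negP => /eqP Em.
  have E : m = ord0 by apply: val_inj.
  by move: Hs1; rewrite E cm_first // ltxx.
have Hmr : (m <= r.+1)%N by apply: ltnW.
have Hsm : s m <= m%:Z + 1.
  have := cm_bound Hc m.
  rewrite (eq_bigr (fun _ => 1)); last by move=> k Hk; exact: Hone.
  by rewrite count_lt // addrC.
have [Lz _] := Hirr.
have Ht3 : 3 <= z m by lia.
have Hspos : forall i, 1 <= s i by apply: cm_pos.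
pose P := [pred i : 'I_r.+1 | (i < m)%N && (z i <= 0)].
case Es: (s m) => [sn|sn]; last by rewrite Es in Hs1.
case: (leqP sn #|P|) => HP.
  case/card_geqP: HP => S [Su Ssz Ssub].
  have HS : forall i, i \in S -> (i < m)%N && (z i <= 0).
    by move=> i /Ssub; rewrite inE.
  have HmS : (m \in S) = false by apply/negP => /HS; rewrite ltnn.
  pose y : zvec r.+1 := [ffun i => ((i == m) : nat)%:Z - ((i \in S) : nat)%:Z].
  have HsumS : \sum_i (((i \in S) : nat)%:Z) = sn%:Z.
    rewrite (sum_ind (fun i => i \in S)); congr Posz.
    by rewrite -Ssz -(card_uniqP Su).
  apply: (@red _ s z y m m Hirr).
  - rewrite /dot; under eq_bigr do rewrite ffunE mulrBl.
    rewrite sumrB sum_delta Es.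
    rewrite (eq_bigr (fun i => ((i \in S) : nat)%:Z)) ?HsumS ?subrr //.
    move=> i _; case: (boolP (i \in S)) => H; last by rewrite mul0r.
    by case/andP: (HS _ H) => H1 _; rewrite Hone // mulr1.
  - by rewrite ffunE eqxx HmS.
  - rewrite ffunE eqxx HmS /=; apply/eqP => E; move: Ht3; rewrite -E; lia.
  - have Hpt : forall i, ((i == m) : nat)%:Z * (z m - 1) - ((i \in S) : nat)%:Z
        <= y i * (z i - y i).
      move=> i; rewrite ffunE; case: (eqVneq i m) => [->|Him].
        rewrite HmS /=; lia.
      rewrite /=; case: (boolP (i \in S)) => HiS /=; last by lia.
      by case/andP: (HS _ HiS) => _ Hz; lia.
    apply: le_trans (ler_sum _ (fun i _ => Hpt i)).
    rewrite sumrB sum_delta HsumS; rewrite Es in Ht; lia.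
case: (boolP [exists a : 'I_r.+1, (a < m)%N && (z a < 0)]).
  case/existsP => a /andP [Ham Hza].
  case: (boolP [exists b : 'I_r.+1, (b < m)%N && (0 < z b)]).
    case/existsP => b /andP [Hbm Hzb].
    have Hab : (b == a) = false by apply/negP => /eqP E; rewrite E in Hzb; lia.
    have Hmb : (m == b) = false by apply/negP => /eqP E; rewrite -E ltnn in Hbm.
    have Hma : (m == a) = false by apply/negP => /eqP E; rewrite -E ltnn in Ham.
    pose y : zvec r.+1 := [ffun i => ((i == b) : nat)%:Z - ((i == a) : nat)%:Z].
    apply: (@red _ s z y b m Hirr).
    - rewrite /dot; under eq_bigr do rewrite ffunE mulrBl.
      by rewrite sumrB !sum_delta !Hone // subrr.
    - by rewrite ffunE eqxx Hab.
    - rewrite ffunE Hmb Hma /=; apply/eqP => E; move: Ht3; rewrite -E; lia.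
    - apply: sumr_ge0 => i _; rewrite ffunE.
      case: (eqVneq i b) => [->|Hib]; first by rewrite Hab /=; lia.
      case: (eqVneq i a) => [->|Hia] /=; lia.
  rewrite negb_exists => /forallP Hb.
  have Hzb : forall i : 'I_r.+1, (i < m)%N -> z i <= 0.
    move=> i Him; have := Hb i; rewrite Him /= -leNgt; done.
  have HPm : #|P| = m.
    rewrite -(card_lt Hmr); apply: eq_card => i; rewrite !inE.
    by case: (boolP (i < m)%N) => // /Hzb ->.
  rewrite HPm in HP.
  have Hsn : sn = m.+1 by rewrite Es in Hsm; lia.
  have Hma : (m == a) = false by apply/negP => /eqP E; rewrite -E ltnn in Ham.
  have Hsumlt : \sum_(i : 'I_r.+1) ((((i < m)%N) : nat)%:Z) = m%:Z.
    by rewrite (sum_ind (fun i : 'I_r.+1 => (i < m)%N)) card_lt.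
  pose y : zvec r.+1 := [ffun i => ((i == m) : nat)%:Z - (((i < m)%N) : nat)%:Z
                                    - ((i == a) : nat)%:Z].
  apply: (@red _ s z y m m Hirr).
  - rewrite /dot; under eq_bigr do rewrite ffunE !mulrBl.
    rewrite !sumrB !sum_delta Es Hone //.
    rewrite (eq_bigr (fun i : 'I_r.+1 => (((i < m)%N) : nat)%:Z)) ?Hsumlt; last first.
      move=> i _; case: (boolP (i < m)%N) => H; last by rewrite mul0r.
      by rewrite Hone // mulr1.
    rewrite Hsn; lia.
  - by rewrite ffunE eqxx ltnn Hma.
  - rewrite ffunE eqxx ltnn Hma /=; apply/eqP => E; move: Ht3; rewrite -E; lia.
  - have Hpt : forall i, ((i == m) : nat)%:Z * (z m - 1) - (((i < m)%N) : nat)%:Z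
        - ((i == a) : nat)%:Z <= y i * (z i - y i).
      move=> i; rewrite ffunE; case: (eqVneq i m) => [->|Him].
        rewrite ltnn Hma /=; lia.
      case: (eqVneq i a) => [->|Hia]; first by rewrite Ham /=; lia.
      case: (boolP (i < m)%N) => Hi /=; last by lia.
      by have := Hzb i Hi; lia.
    apply: le_trans (ler_sum _ (fun i _ => Hpt i)).
    rewrite !sumrB !sum_delta sum_delta1 Hsumlt; rewrite Es Hsn in Ht; lia.
rewrite negb_exists => /forallP Ha.
have Hzb0 : forall i : 'I_r.+1, (i < m)%N -> 0 <= z i.
  move=> i Him; have := Ha i; rewrite Him /= -leNgt; done.
have Hex : [exists k : 'I_r.+1, (m < k)%N && (z k <= 0)].
  case: (boolP [exists k : 'I_r.+1, (m < k)%N && (z k <= 0)]) => //.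
  rewrite negb_exists => /forallP Hk.
  have H1 : 0 < z m * s m by apply: mulr_gt0; lia.
  have H2 : 0 <= \sum_(i | i != m) z i * s i.
    apply: sumr_ge0 => i Him; apply: mulr_ge0; last by have := Hspos i; lia.
    case: (ltngtP i m) => Hi; first exact: Hzb0.
      by have := Hk i; rewrite Hi /= -ltNge => /ltW.
    by move: Him; rewrite -val_eqE /= Hi eqxx.
  move: Lz; rewrite /in_orth /dot (bigD1 m) //= => E.
  have H3 : 0 < z m * s m + \sum_(i | i != m) z i * s i.
    by apply: lt_le_trans H1 _; rewrite lerDl.
  by rewrite E ltxx in H3.
pose Q := fun n => [&& (n < r.+1)%N, (m < n)%N & z (inord n) <= 0].
have HexQ : exists n, Q n.
  case/existsP: Hex => k /andP [H1 H2]; exists k; rewrite /Q ltn_ord H1 /=.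
  by rewrite inord_val.
case: (ex_minnP HexQ) => k0 /and3P [Hk0r Hmk Hzk] Hmin.
pose k : 'I_r.+1 := Ordinal Hk0r.
have Ek : inord k0 = k by apply: val_inj; rewrite /= inordK.
rewrite Ek in Hzk.
have Hmid : forall i : 'I_r.+1, (m < i)%N -> (i < k)%N -> 0 < z i.
  move=> i Hmi Hik; rewrite ltNge; apply/negP => Hz.
  have := Hmin i; rewrite /Q ltn_ord Hmi inord_val Hz => /(_ erefl).
  by rewrite leqNgt Hik.
have Hmk' : (m == k) = false.
  by apply/negP => /eqP E; move: Hmk; rewrite -[k0]/(nat_of_ord k) -E ltnn.
have Hkm' : (k == m) = false by rewrite eq_sym.
have [u [Hu1 Hu2]] := ss Hc (ltnW (ltn_ord k))
    (N := s k - s m) ltac:(rewrite subr_ge0; apply: cm_mono => //; exact: ltnW)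
    ltac:(have := cm_bound Hc k; have := Hspos m; lia).
have Huk : u k = false by apply/negP => /Hu1; rewrite ltnn.
pose y : zvec r.+1 := [ffun i => ((i == m) : nat)%:Z + ((u i) : nat)%:Z
                                  - ((i == k) : nat)%:Z].
apply: (@red _ s z y m m Hirr).
- rewrite /dot; under eq_bigr do rewrite ffunE mulrBl mulrDl.
  rewrite sumrB big_split /= !sum_delta Hu2; lia.
- by rewrite ffunE eqxx Hmk'; case: (u m).
- rewrite ffunE eqxx Hmk' /=; apply/eqP => E; move: Ht3; rewrite -E.
  by case: (u m) => /=; lia.
- have Hpt : forall i, ((i == m) : nat)%:Z * (z m - 1) - ((i == k) : nat)%:Z
      - ((P i) : nat)%:Z <= y i * (z i - y i).
    move=> i; rewrite ffunE; case: (eqVneq i m) => [->|Him].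
      rewrite Hmk' /= ltnn /=; by case: (u m) => /=; lia.
    case: (eqVneq i k) => [->|Hik].
      rewrite Huk /=; have -> : (k < m)%N = false by apply/negbTE; rewrite -leqNgt; exact: ltnW.
      by rewrite /=; lia.
    rewrite /=; case: (boolP (u i)) => Hui /=; last by case: (_ && _) => /=; lia.
    case: (ltngtP i m) => Hi /=.
    + by have := Hzb0 i Hi; case: (lerP (z i) 0) => /=; lia.
    + by have := Hmid i Hi (Hu1 _ Hui); lia.
    + by move: Him; rewrite -val_eqE /= Hi eqxx.
  apply: le_trans (ler_sum _ (fun i _ => Hpt i)).
  rewrite !sumrB sum_delta sum_delta1 (sum_ind P); rewrite Es in Ht.
  have Hfin : forall c : nat, (c + 1 <= sn)%N -> 0 <= z m - 1 - 1 - c%:Z.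
    by move=> c Hc0; lia.
  apply: Hfin; rewrite addn1; exact: HP.
Qed.

Unset Implicit Arguments.
Theorem lemma7p3 (r : nat) (sigma : zvec r.+1) (m : 'I_r.+1) (z : zvec r.+1) :
  changemaker sigma ->
  1 < sigma ord_max ->
  1 < sigma m ->
  (forall j : 'I_r.+1, (j < m)%N -> ~ (1 < sigma j)) ->
  irreducible_in (in_orth sigma) z ->
  `|z m| <= sigma m.
Proof.
move=> Hc _ Hs1 Hlt Hirr.
case: (lerP 0 (z m)) => Hz.
  rewrite ger0_norm // leNgt; apply/negP => H.
  by apply: (keyK Hc Hs1 Hlt Hirr); lia.
rewrite ltr0_norm // leNgt; apply/negP => H.
have E : (- z) m = - (z m) by rewrite ffunE.
apply: (keyK Hc Hs1 Hlt (irr_neg Hirr)); rewrite E; lia.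
Qed.
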